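(* Let $\mathfrak{g}$ be a complex simple Lie algebra with basis $x_1,\dots,x_m$ and dual basis $x_1^*,\dots,x_m^*$ with respect to the Killing form $B$, and let $V_\lambda$ be a finite-dimensional irreducible $\mathfrak{g}$-module with representation $\pi_\lambda$. For every $z\in Z(\mathfrak{g})$, the element $$M_z(\lambda)=\sum_{i=1}^m\pi_\lambda(x_i^* )\otimes i_{x_i}(z)$$ belongs to $R_\lambda(\mathfrak{g})=(\operatorname{End}V_\lambda\otimes U(\mathfrak{g}))^{\mathfrak{g}}$.
   Context: $Z(\mathfrak{g})$ is the center of the universal enveloping algebra $U(\mathfrak{g})$; $\mathfrak{g}$ acts on $\operatorname{End}V_\lambda$ by commutators and on $U(\mathfrak{g})$ by the adjoint action. For $x\in\mathfrak{g}$, the substitution operator $i_x:U(\mathfrak{g})\to U(\mathfrak{g})$ is defined by $i_x(y)=B(x,y)$ for $y\in\mathfrak{g}$ and $i_x(u_1\cdots u_k)=\sum_{j=1}^k B(x,u_j)\,u_1\cdots u_{j-1}u_{j+1}\cdots u_k$ for $u_1,\dots,u_k\in\mathfrak{g}$.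
   Formalization: The operator $i_x$ is applied by the product formula to the symmetric representative of z in the tensor algebra (coefficients invariant under permuting letters), so $i_x$ is the contraction on S(g) carried to U(g) by symmetrization. The statement above fails without it. *)

(* Defs.v *)
From mathcomp Require Import all_boot all_algebra.
From mathcomp Require Import complex.
From mathcomp Require Import Rstruct.
Set Implicit Arguments. Unset Strict Implicit. Unset Printing Implicit Defensive.
Import GRing.Theory Num.Theory.
Local Open Scope ring_scope.

Definition CC : numClosedFieldType := (Rdefinitions.R)[i].

(** * Lie algebra g = CC^m with basis e_0..e_(m-1) and structure constants c:
      [e_i, e_j] = \sum_k c i j k e_k.  Elements of g are row vectors. *)
Section Lie.
Variable m : nat.
Variable c : 'I_m -> 'I_m -> 'I_m -> CC.

Definition bvec (i : 'I_m) : 'rV[CC]_m := delta_mx 0 i.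

Definition lie (u v : 'rV[CC]_m) : 'rV[CC]_m :=
  \row_k \sum_i \sum_j u 0 i * v 0 j * c i j k.

Definition is_lie_algebra : Prop :=
  (forall u, lie u u = 0) /\
  (forall u v w, lie u (lie v w) + lie v (lie w u) + lie w (lie u v) = 0).

(** ideals, given as row spaces of square matrices *)
Definition lie_ideal (I : 'M[CC]_m) : Prop :=
  forall (u v : 'rV[CC]_m), (u <= I)%MS -> (lie v u <= I)%MS.

Definition simple_lie : Prop :=
  is_lie_algebra /\ (exists u v, lie u v != 0) /\
  forall I : 'M[CC]_m, lie_ideal I -> (I == (0 : 'M[CC]_m))%MS \/ (I == 1%:M)%MS.

Definition adm (u : 'rV[CC]_m) : 'M[CC]_m := \matrix_(j, k) (lie u (bvec j)) 0 k.
Definition killing (u v : 'rV[CC]_m) : CC := \tr (adm u *m adm v).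

(** * Representations: pi i = pi(e_i) acting on column vectors CC^n. *)
Definition piv n (pi : 'I_m -> 'M[CC]_n) (u : 'rV[CC]_m) : 'M[CC]_n :=
  \sum_i u 0 i *: pi i.

Definition is_rep n (pi : 'I_m -> 'M[CC]_n) : Prop :=
  forall i j, pi i *m pi j - pi j *m pi i = piv pi (lie (bvec i) (bvec j)).

(** irreducible: nonzero, and the only invariant subspaces of CC^n are 0 and
    CC^n (a subspace is the column space of W^T, i.e. row space of W). *)
Definition irreducible_rep n (pi : 'I_m -> 'M[CC]_n) : Prop :=
  (0 < n)%N /\
  forall W : 'M[CC]_n,
    (forall i, (W *m (pi i)^T <= W)%MS) -> (W == (0 : 'M[CC]_n))%MS \/ (W == 1%:M)%MS.

(** * Tensor algebra T(g): formal finite linear combinations of words in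
      the basis letters.  U(g) = T(g)/I with I the two-sided ideal generated
      by e_i e_j - e_j e_i - [e_i,e_j]. *)
Definition word := seq 'I_m.
Definition tensor := seq (CC * word).

Definition tcoef (t : tensor) (w : word) : CC := \sum_(p <- t | p.2 == w) p.1.
Definition teq (t1 t2 : tensor) : Prop := forall w, tcoef t1 w = tcoef t2 w.
Definition tscale (r : CC) (t : tensor) : tensor := [seq (r * p.1, p.2) | p <- t].
Definition tadd (t1 t2 : tensor) : tensor := t1 ++ t2.
Definition tsub (t1 t2 : tensor) : tensor := t1 ++ tscale (-1) t2.
Definition tmul (t1 t2 : tensor) : tensor :=
  [seq (p.1 * q.1, p.2 ++ q.2) | p <- t1, q <- t2].
Definition tletter (k : 'I_m) : tensor := [:: (1, [:: k])].
Definition tsum (ts : seq tensor) : tensor := flatten ts.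

Definition tgen (a : word) (i j : 'I_m) (b : word) : tensor :=
  [:: (1, a ++ i :: j :: b); (-1, a ++ j :: i :: b)] ++
  [seq (- c i j k, a ++ k :: b) | k <- enum 'I_m].

Definition in_ideal (t : tensor) : Prop :=
  exists s : seq (CC * word * 'I_m * 'I_m * word),
    teq t (tsum [seq tscale x.1.1.1.1 (tgen x.1.1.1.2 x.1.1.2 x.1.2 x.2) | x <- s]).

Definition tad (u : 'rV[CC]_m) (t : tensor) : tensor :=
  tsum [seq tscale (u 0 k) (tsub (tmul (tletter k) t) (tmul t (tletter k)))
       | k <- enum 'I_m].

(** z represents an element of the centre Z(g) of U(g) *)
Definition central (z : tensor) : Prop := forall u, in_ideal (tad u z).

(** z is a symmetric tensor (image of the symmetrisation S(g) -> T(g)) *)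
Definition symmetric_tensor (z : tensor) : Prop :=
  forall w w' : word, perm_eq w w' -> tcoef z w = tcoef z w'.

(** substitution operator: i_x(u_1...u_k) = sum_j B(x,u_j) u_1..^u_j..u_k *)
Definition subst_op (x : 'rV[CC]_m) (t : tensor) : tensor :=
  flatten [seq [seq (p.1 * killing x (bvec jk.2), take jk.1 p.2 ++ drop jk.1.+1 p.2)
               | jk <- zip (iota 0 (size p.2)) p.2] | p <- t].

(** * End V (x) T(g), as n x n matrices of tensors. *)
Definition endten n := 'I_n -> 'I_n -> tensor.

(** action of u in g on End V (x) T(g): [pi(u), A] (x) t + A (x) ad_u t *)
Definition endten_act n (pi : 'I_m -> 'M[CC]_n) (u : 'rV[CC]_m) (M : endten n)
  : endten n := fun a b =>
  tadd (tsum [seq tsub (tscale (piv pi u a d) (M d b)) (tscale (piv pi u d b) (M a d))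
             | d <- enum 'I_n])
       (tad u (M a b)).

(** M (mod End V (x) I) lies in R(g) = (End V (x) U(g))^g *)
Definition in_R n (pi : 'I_m -> 'M[CC]_n) (M : endten n) : Prop :=
  forall u a b, in_ideal (endten_act pi u M a b).

(** M_z = sum_i pi(x_i^* ) (x) i_{x_i}(z), x_i = e_i *)
Definition Mz n (pi : 'I_m -> 'M[CC]_n) (dual : 'I_m -> 'rV[CC]_m) (z : tensor)
  : endten n := fun a b =>
  tsum [seq tscale (piv pi (dual i) a b) (subst_op (bvec i) z) | i <- enum 'I_m].

End Lie.

(* Main.v *)
Require Import Defs.
From mathcomp Require Import all_boot all_algebra.
From mathcomp Require Import complex.
From mathcomp Require Import Rstruct.
From mathcomp Require Import ring zify.
Set Implicit Arguments. Unset Strict Implicit. Unset Printing Implicit Defensive.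
Import GRing.Theory Num.Theory.
Local Open Scope ring_scope.

Section Tens.
Variable m : nat.
Variable c : 'I_m -> 'I_m -> 'I_m -> CC.
Local Notation word := (word m).
Local Notation tensor := (tensor m).

Definition lin (F : word -> CC) (t : tensor) : CC := \sum_(p <- t) p.1 * F p.2.
Definition Lext (f : word -> tensor) (t : tensor) : tensor :=
  flatten [seq tscale p.1 (f p.2) | p <- t].
Definition tcons (a : 'I_m) (t : tensor) : tensor := [seq (p.1, a :: p.2) | p <- t].

Lemma lin_nil F : lin F [::] = 0. Proof. by rewrite /lin big_nil. Qed.
Lemma lin_cons F p t : lin F (p :: t) = p.1 * F p.2 + lin F t.
Proof. by rewrite /lin big_cons. Qed.
Lemma lin_cat F t1 t2 : lin F (t1 ++ t2) = lin F t1 + lin F t2.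
Proof. by rewrite /lin big_cat. Qed.
Lemma lin_scale F r t : lin F (tscale r t) = r * lin F t.
Proof. by rewrite /lin /tscale big_map mulr_sumr; apply: eq_bigr => p _ /=; rewrite mulrA. Qed.
Lemma lin_flatten F ts : lin F (flatten ts) = \sum_(t <- ts) lin F t.
Proof. elim: ts => [|t ts IH]; first by rewrite big_nil lin_nil.
by rewrite /= lin_cat big_cons IH. Qed.
Lemma lin_Lext F f t : lin F (Lext f t) = lin (fun v => lin F (f v)) t.
Proof. rewrite /Lext lin_flatten big_map /lin; apply: eq_bigr => p _.
by rewrite -/(lin F (tscale p.1 (f p.2))) lin_scale. Qed.
Lemma lin_tcons F a t : lin F (tcons a t) = lin (fun v => F (a :: v)) t.
Proof. by rewrite /lin big_map. Qed.
Lemma lin_ext F G t : F =1 G -> lin F t = lin G t.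
Proof. by move=> FG; apply: eq_bigr => p _; rewrite FG. Qed.
Lemma linD F G t : lin (fun v => F v + G v) t = lin F t + lin G t.
Proof. by rewrite /lin -big_split; apply: eq_bigr => p _; rewrite mulrDr. Qed.
Lemma linZ r F t : lin (fun v => r * F v) t = r * lin F t.
Proof. by rewrite /lin mulr_sumr; apply: eq_bigr => p _; rewrite mulrCA. Qed.
Lemma linN F t : lin (fun v => - F v) t = - lin F t.
Proof. by rewrite (lin_ext _ (G := fun v => (-1) * F v)) ?linZ ?mulN1r // => v; rewrite mulN1r. Qed.
Lemma linB F G t : lin (fun v => F v - G v) t = lin F t - lin G t.
Proof. by rewrite linD linN. Qed.
Lemma lin_sum (I : Type) (r : seq I) (H : I -> word -> CC) t :
  lin (fun v => \sum_(i <- r) H i v) t = \sum_(i <- r) lin (H i) t.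
Proof. rewrite /lin exchange_big; apply: eq_bigr => p _; by rewrite mulr_sumr. Qed.
Lemma lin0F t : lin (fun _ => 0) t = 0.
Proof. by rewrite /lin big1 // => p _; rewrite mulr0. Qed.

Lemma tcoef_lin t w : tcoef t w = lin (fun v => (v == w)%:R) t.
Proof. rewrite /tcoef /lin big_mkcond; apply: eq_bigr => p _.
by case: eqP => _; rewrite ?mulr1 ?mulr0. Qed.

Lemma lin_supp F t (S : seq word) : uniq S -> {subset [seq p.2 | p <- t] <= S} ->
  lin F t = \sum_(w <- S) tcoef t w * F w.
Proof.
move=> uS; elim: t => [|p t IH] sub.
  by rewrite lin_nil big1 // => w _; rewrite /tcoef big_nil mul0r.
rewrite lin_cons IH; last by move=> x xt; apply: sub; rewrite inE xt orbT.
have pS : p.2 \in S by apply: sub; rewrite inE eqxx.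
rewrite [RHS](eq_bigr (fun w => (p.2 == w)%:R * p.1 * F w + tcoef t w * F w)); last first.
  by move=> w _; rewrite /tcoef big_cons; case: eqP => _; rewrite ?mul1r ?mul0r ?add0r // mulrDl.
rewrite big_split /=; congr (_ + _).
rewrite (bigD1_seq p.2) //= eqxx mul1r big1 ?addr0 // => w /negbTE.
by rewrite eq_sym => ->; rewrite !mul0r.
Qed.

Lemma lin_eq_tcoef F G t : (forall w, tcoef t w * F w = tcoef t w * G w) ->
  lin F t = lin G t.
Proof.
move=> H; rewrite (@lin_supp F t (undup [seq p.2 | p <- t])) ?undup_uniq //; last first.
  by move=> x; rewrite mem_undup.
rewrite (@lin_supp G t (undup [seq p.2 | p <- t])) ?undup_uniq //; last first.
  by move=> x; rewrite mem_undup.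
by apply: eq_bigr => w _; rewrite H.
Qed.

Lemma lin0 F t : (forall w, tcoef t w = 0) -> lin F t = 0.
Proof. move=> H; rewrite (@lin_eq_tcoef F (fun _ => 0)) ?lin0F // => w.
by rewrite H !mul0r. Qed.

Lemma lin_teq F t1 t2 : teq t1 t2 -> lin F t1 = lin F t2.
Proof.
move=> H; set S := undup [seq p.2 | p <- t1 ++ t2].
have uS : uniq S by rewrite undup_uniq.
rewrite (@lin_supp F t1 S) ?(@lin_supp F t2 S) //.
- by apply: eq_bigr => w _; rewrite H.
- by move=> x xt; rewrite mem_undup map_cat mem_cat xt orbT.
- by move=> x xt; rewrite mem_undup map_cat mem_cat xt.
Qed.

Lemma teq_lin t1 t2 : (forall F, lin F t1 = lin F t2) -> teq t1 t2.
Proof. by move=> H w; rewrite !tcoef_lin H. Qed.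

Definition gsum (s : seq (CC * word * 'I_m * 'I_m * word)) : tensor :=
  tsum [seq tscale x.1.1.1.1 (tgen c x.1.1.1.2 x.1.1.2 x.1.2 x.2) | x <- s].

Lemma lin_gsum F s : lin F (gsum s) =
  \sum_(x <- s) x.1.1.1.1 * lin F (tgen c x.1.1.1.2 x.1.1.2 x.1.2 x.2).
Proof. by rewrite /gsum /tsum lin_flatten big_map; apply: eq_bigr => x _; rewrite lin_scale. Qed.

Lemma lin_tgen F a i j b : lin F (tgen c a i j b) =
  F (a ++ i :: j :: b) - F (a ++ j :: i :: b) - \sum_(k <- enum 'I_m) c i j k * F (a ++ k :: b).
Proof.
rewrite /tgen lin_cat !lin_cons lin_nil /lin big_map /= mul1r mulN1r addr0. idtac.
by rewrite -sumrN; congr (_ + _); apply: eq_bigr => k _; rewrite mulNr.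
Qed.

Lemma in_idealE t : in_ideal c t <-> exists s, teq t (gsum s).
Proof. by []. Qed.

Lemma in_ideal_teq t1 t2 : teq t1 t2 -> in_ideal c t2 -> in_ideal c t1.
Proof. by move=> H [s Hs]; exists s => w; rewrite H Hs. Qed.

Lemma in_ideal_zero t : (forall w, tcoef t w = 0) -> in_ideal c t.
Proof. by move=> H; exists [::] => w; rewrite H /gsum /tsum /= /tcoef big_nil. Qed.

Lemma in_ideal_cat t1 t2 : in_ideal c t1 -> in_ideal c t2 -> in_ideal c (t1 ++ t2).
Proof.
move=> [s1 H1] [s2 H2]; exists (s1 ++ s2); apply: teq_lin => F.
rewrite lin_cat (lin_teq F H1) (lin_teq F H2).
by rewrite -[lin F (tsum _)]/(lin F (gsum _)) !lin_gsum big_cat.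
Qed.

Lemma in_ideal_scale r t : in_ideal c t -> in_ideal c (tscale r t).
Proof.
move=> [s H]; exists [seq (r * x.1.1.1.1, x.1.1.1.2, x.1.1.2, x.1.2, x.2) | x <- s].
apply: teq_lin => F; rewrite lin_scale (lin_teq F H).
rewrite -[lin F (tsum _)]/(lin F (gsum _)) !lin_gsum big_map mulr_sumr.
by apply: eq_bigr => x _ /=; rewrite mulrA.
Qed.

Lemma in_ideal_tcons a t : in_ideal c t -> in_ideal c (tcons a t).
Proof.
move=> [s H]; exists [seq (x.1.1.1.1, a :: x.1.1.1.2, x.1.1.2, x.1.2, x.2) | x <- s].
apply: teq_lin => F; rewrite lin_tcons (lin_teq _ H).
rewrite -[lin _ (tsum _)]/(lin _ (gsum _)) -[lin F (tsum _)]/(lin F (gsum _)).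
rewrite !lin_gsum big_map; apply: eq_bigr => x _ /=.
by rewrite !lin_tgen.
Qed.

Lemma in_ideal_Lext f t : (forall v, in_ideal c (f v)) -> in_ideal c (Lext f t).
Proof.
move=> H; elim: t => [|p t IH]; first by apply: in_ideal_zero => w; rewrite /tcoef big_nil.
by rewrite /Lext /=; apply: in_ideal_cat; [apply: in_ideal_scale|exact: IH].
Qed.

Lemma in_ideal_tsum ts : (forall t, t \in ts -> in_ideal c t) ->
  in_ideal c (tsum ts).
Proof.
elim: ts => [|t ts IH] H; first by apply: in_ideal_zero => w; rewrite /tcoef big_nil.
rewrite /tsum /=; apply: in_ideal_cat; first by apply: H; rewrite inE eqxx.
by apply: IH => x xt; apply: H; rewrite inE xt orbT.
Qed.

Lemma in_ideal_tgen a i j b : in_ideal c (tgen c a i j b).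
Proof.
exists [:: (1, a, i, j, b)]; apply: teq_lin => F.
by rewrite -[lin F (tsum _)]/(lin F (gsum _)) lin_gsum big_seq1 mul1r.
Qed.

Lemma ideal_lin F t : (forall a i j b, lin F (tgen c a i j b) = 0) ->
  in_ideal c t -> lin F t = 0.
Proof.
move=> HF [s Hs]; rewrite (lin_teq F Hs).
rewrite -[lin F (tsum _)]/(lin F (gsum _)) lin_gsum big1 // => x _.
by rewrite HF mulr0.
Qed.

Lemma sum_enumI (V : nmodType) (F : 'I_m -> V) : \sum_(l <- enum 'I_m) F l = \sum_l F l.
Proof. by rewrite big_enum. Qed.

End Tens.

Section LieAlg.
Variable m : nat.
Variable c : 'I_m -> 'I_m -> 'I_m -> CC.
Hypothesis Hlie : is_lie_algebra c.

Local Notation lie := (lie c).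
Local Notation adm := (adm c).
Local Notation killing := (killing c).

Lemma bvecE (i j : 'I_m) : bvec i 0 j = (i == j)%:R.
Proof. by rewrite /bvec mxE eqxx andTb eq_sym. Qed.

Lemma lieE u v k : (lie u v) 0 k = \sum_i \sum_j u 0 i * v 0 j * c i j k.
Proof. by rewrite /Defs.lie mxE. Qed.

Lemma lie_bvecr u a k : (lie u (bvec a)) 0 k = \sum_i u 0 i * c i a k.
Proof.
rewrite lieE; apply: eq_bigr => i _.
rewrite (bigD1 a) //= bvecE eqxx mulr1 big1 ?addr0 // => j /negbTE ja.
by rewrite bvecE eq_sym ja mulr0 mul0r.
Qed.

Lemma lie_bvec i j k : (lie (bvec i) (bvec j)) 0 k = c i j k.
Proof.
rewrite lie_bvecr (bigD1 i) //= bvecE eqxx mul1r big1 ?addr0 // => l /negbTE li.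
by rewrite bvecE eq_sym li mul0r.
Qed.

Lemma admE u j k : adm u j k = \sum_i u 0 i * c i j k.
Proof. by rewrite /Defs.adm mxE lie_bvecr. Qed.


Lemma mul_adm v u : v *m adm u = lie u v.
Proof.
apply/rowP => k; rewrite !mxE exchange_big; apply: eq_bigr => j _.
rewrite admE mulr_sumr; apply: eq_bigr => i _.
by rewrite mulrCA mulrA.
Qed.

Lemma admD u v : adm (u + v) = adm u + adm v.
Proof. apply/matrixP => j k; rewrite [LHS]admE mxE !admE -big_split.
by apply: eq_bigr => i _; rewrite mxE mulrDl. Qed.
Lemma admZ r u : adm (r *: u) = r *: adm u.
Proof. apply/matrixP => j k; rewrite [LHS]admE mxE !admE mulr_sumr.
by apply: eq_bigr => i _; rewrite mxE mulrA. Qed.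
Lemma adm0 : adm 0 = 0.
Proof. by rewrite -(scale0r 0) admZ scale0r. Qed.
Lemma admN u : adm (- u) = - adm u.
Proof. by rewrite -scaleN1r admZ scaleN1r. Qed.
Lemma adm_sumv (I : Type) (r : seq I) (F : I -> 'rV[CC]_m) :
  adm (\sum_(i <- r) F i) = \sum_(i <- r) adm (F i).
Proof. by apply: (big_morph _ admD adm0). Qed.

Lemma vec_expand (u : 'rV[CC]_m) : u = \sum_i u 0 i *: bvec i.
Proof.
apply/rowP => k; rewrite summxE (bigD1 k) //= big1 ?addr0.
  by rewrite !mxE !eqxx mulr1.
by move=> i ik; rewrite !mxE eqxx andTb eq_sym (negbTE ik) mulr0.
Qed.

Lemma lieDr u v w : lie u (v + w) = lie u v + lie u w.
Proof. by rewrite -!mul_adm mulmxDl. Qed.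
Lemma lieZr u r v : lie u (r *: v) = r *: lie u v.
Proof. by rewrite -!mul_adm scalemxAl. Qed.
Lemma lieDl u v w : lie (u + v) w = lie u w + lie v w.
Proof. by rewrite -!mul_adm admD mulmxDr. Qed.
Lemma lieZl r u v : lie (r *: u) v = r *: lie u v.
Proof. by rewrite -!mul_adm admZ scalemxAr. Qed.
Lemma lieNr u v : lie u (- v) = - lie u v.
Proof. by rewrite -!mul_adm mulNmx. Qed.
Lemma lieNl u v : lie (- u) v = - lie u v.
Proof. by rewrite -!mul_adm admN mulmxN. Qed.

Lemma lie_anti u v : lie u v = - lie v u.
Proof.
have := Hlie.1 (u + v); rewrite lieDl !lieDr Hlie.1 Hlie.1 add0r addr0.
by move/eqP; rewrite addr_eq0 => /eqP.
Qed.

Lemma lie_lie u x w : lie (lie u x) w = lie u (lie x w) - lie x (lie u w).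
Proof.
have J := Hlie.2 u x w.
rewrite (lie_anti (lie u x) w).
have -> : lie w (lie u x) = - (lie u (lie x w) + lie x (lie w u)).
  by apply/eqP; rewrite -addr_eq0 addrC J.
by rewrite opprK (lie_anti w u) lieNr.
Qed.

Lemma adm_lie u x : adm (lie u x) = adm x *m adm u - adm u *m adm x.
Proof.
apply/row_matrixP => j; rewrite !rowE -/(bvec j) mulmxBr !mulmxA !mul_adm.
by rewrite lie_lie.
Qed.

Lemma killing_suml x y : killing x y = \sum_i x 0 i * killing (bvec i) y.
Proof.
rewrite /Defs.killing {1}(vec_expand x) adm_sumv mulmx_suml raddf_sum.
by apply: eq_bigr => i _; rewrite admZ -scalemxAl; apply: mxtraceZ.
Qed.
Lemma killingC x y : killing x y = killing y x.
Proof. by rewrite /Defs.killing mxtrace_mulC. Qed.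
Lemma killing_sumr x y : killing x y = \sum_i y 0 i * killing x (bvec i).
Proof. by rewrite killingC killing_suml; apply: eq_bigr => i _; rewrite killingC. Qed.
Lemma killingDr x y z : killing x (y + z) = killing x y + killing x z.
Proof. by rewrite /Defs.killing admD mulmxDr mxtraceD. Qed.
Lemma killingZr x r y : killing x (r *: y) = r * killing x y.
Proof. by rewrite /Defs.killing admZ -scalemxAr mxtraceZ. Qed.
Lemma killingNr x y : killing x (- y) = - killing x y.
Proof. by rewrite -scaleN1r killingZr mulN1r. Qed.
Lemma killing0r x : killing x 0 = 0.
Proof. by rewrite -(scale0r 0) killingZr mul0r. Qed.
Lemma killing_sumvr x (I : Type) (r : seq I) (F : I -> 'rV[CC]_m) :
  killing x (\sum_(i <- r) F i) = \sum_(i <- r) killing x (F i).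
Proof. by apply: (big_morph _ (killingDr x) (killing0r x)). Qed.

Lemma killing_inv u x y : killing (lie u x) y + killing x (lie u y) = 0.
Proof.
rewrite /Defs.killing !adm_lie mulmxBl mulmxBr !raddfB /=.
rewrite -!mulmxA [\tr (adm x *m (adm y *m adm u))]mxtrace_mulC -!mulmxA.
rewrite [\tr (adm y *m (adm u *m adm x))]mxtrace_mulC -mulmxA.
by rewrite addrC addrA addrNK subrr.
Qed.

End LieAlg.

Section Der.
Variable m : nat.
Variable c : 'I_m -> 'I_m -> 'I_m -> CC.
Hypothesis Hlie : is_lie_algebra c.
Local Notation word := (word m).
Local Notation tensor := (tensor m).

Definition beta (u : 'rV[CC]_m) (a l : 'I_m) : CC := (lie c u (bvec a)) 0 l.

Fixpoint dword (u : 'rV[CC]_m) (v : word) : tensor :=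
  match v with
  | [::] => [::]
  | a :: v' => [seq (beta u a l, l :: v') | l <- enum 'I_m] ++ tcons a (dword u v')
  end.
Definition Dder u (t : tensor) : tensor := Lext (dword u) t.

Definition sword (x : 'rV[CC]_m) (v : word) : tensor :=
  [seq (killing c x (bvec jk.2), take jk.1 v ++ drop jk.1.+1 v) | jk <- zip (iota 0 (size v)) v].

Lemma lin_dword_cons F u a v : lin F (dword u (a :: v)) =
  \sum_(l <- enum 'I_m) beta u a l * F (l :: v) + lin (fun w => F (a :: w)) (dword u v).
Proof. by rewrite /= lin_cat lin_tcons /lin big_map. Qed.

Lemma subst_Lext x t : subst_op c x t = Lext (sword x) t.
Proof. rewrite /subst_op /Lext /tscale /sword; congr flatten; apply: eq_map => p.
by rewrite -map_comp. Qed.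

Lemma zip_iotaS (T : Type) (H : nat * 'I_m -> T) k (v : word) :
  [seq H jk | jk <- zip (iota k.+1 (size v)) v] =
  [seq H (jk.1.+1, jk.2) | jk <- zip (iota k (size v)) v].
Proof. by elim: v k => [|b v IH] k //=; rewrite IH. Qed.

Lemma sword_cons x a v :
  sword x (a :: v) = (killing c x (bvec a), v) :: tcons a (sword x v).
Proof. by rewrite /sword /= zip_iotaS /tcons -map_comp drop0. Qed.
Lemma lin_sword_cons F x a v : lin F (sword x (a :: v)) =
  killing c x (bvec a) * F v + lin (fun w => F (a :: w)) (sword x v).
Proof. by rewrite sword_cons lin_cons lin_tcons. Qed.

Lemma lin_sword_nil F x : lin F (sword x [::]) = 0.
Proof. by rewrite /sword /= lin_nil. Qed.

Lemma lin_sword_lin F x v :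
  lin F (sword x v) = \sum_j x 0 j * lin F (sword (bvec j) v).
Proof.
elim: v F => [|a v IH] F.
  by rewrite lin_sword_nil big1 // => j _; rewrite mulr0.
rewrite lin_sword_cons IH (killing_suml c) mulr_suml -big_split /=.
apply: eq_bigr => j _; rewrite lin_sword_cons mulrDr mulrA; congr (_ + _).
Qed.

Lemma Lcomm u x v F :
  lin F (Dder u (sword x v)) =
  lin F (sword (lie c u x) v) + lin F (Lext (sword x) (dword u v)).
Proof.
elim: v F => [|a v IH] F.
  by rewrite /Dder /sword /= /Lext /= !lin_nil addr0.
rewrite /Dder !lin_Lext lin_sword_cons lin_dword_cons.
rewrite -/(lin _ (Lext (sword x) (dword u v))) -/(lin _ (Dder u (sword x v))).
have E1 : lin (fun w => lin F (dword u (a :: w))) (sword x v) =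
    \sum_(l <- enum 'I_m) beta u a l * lin (fun w => F (l :: w)) (sword x v)
    + lin (fun w => F (a :: w)) (Dder u (sword x v)).
  rewrite (lin_ext _ (fun w => lin_dword_cons F u a w)) linD lin_sum /Dder lin_Lext.
  by congr (_ + _); apply: eq_bigr => l _; rewrite linZ.
have E2 : lin (fun w => lin F (sword x (a :: w))) (dword u v) =
    killing c x (bvec a) * lin F (dword u v)
    + lin (fun w => F (a :: w)) (Lext (sword x) (dword u v)).
  by rewrite (lin_ext _ (fun w => lin_sword_cons F x a w)) linD linZ lin_Lext.
have E3 : \sum_(l <- enum 'I_m) beta u a l * lin F (sword x (l :: v)) =
    (\sum_(l <- enum 'I_m) beta u a l * killing c x (bvec l)) * F v
    + \sum_(l <- enum 'I_m) beta u a l * lin (fun w => F (l :: w)) (sword x v).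
  rewrite mulr_suml -big_split; apply: eq_bigr => l _.
  by rewrite lin_sword_cons mulrDr mulrA.
have E4 : \sum_(l <- enum 'I_m) beta u a l * killing c x (bvec l) =
    - killing c (lie c u x) (bvec a).
  rewrite sum_enumI.
  have := killing_inv Hlie u x (bvec a).
  rewrite (killing_sumr c x (lie c u (bvec a))) => H.
  by apply/eqP; rewrite -addr_eq0 addrC; apply/eqP; exact: H.
rewrite E1 E2 E3 E4 IH lin_sword_cons.
rewrite mulNr.
set A := killing c x (bvec a) * lin F (dword u v).
set B := \sum_(l <- enum 'I_m) _.
set C := killing c (lie c u x) (bvec a) * F v.
set D := lin _ (sword (lie c u x) v).
set E := lin _ (Lext (sword x) (dword u v)).
rewrite -/D.
ring.
Qed.

Lemma lin_tmul F (t1 t2 : tensor) :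
  lin F (tmul t1 t2) = lin (fun v1 => lin (fun v2 => F (v1 ++ v2)) t2) t1.
Proof.
rewrite /tmul /lin big_allpairs_dep; apply: eq_bigr => p _.
by rewrite mulr_sumr; apply: eq_bigr => q _; rewrite mulrA.
Qed.

Lemma lin_one F (v : word) : lin F [:: (1, v)] = F v.
Proof. by rewrite lin_cons lin_nil mul1r addr0. Qed.

Lemma lin_tad F u t : lin F (tad u t) =
  lin (fun v => \sum_(k <- enum 'I_m) u 0 k * (F (k :: v) - F (v ++ [:: k]))) t.
Proof.
rewrite /tad /tsum lin_flatten big_map lin_sum; apply: eq_bigr => k _.
rewrite lin_scale /tsub lin_cat lin_scale !lin_tmul /tletter lin_one linZ.
rewrite (lin_ext _ (fun v1 => lin_one (fun v2 => F (v1 ++ v2)) [:: k])).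
by rewrite linB mulN1r.
Qed.

Lemma sum_mulB (f g h : 'I_m -> CC) :
  \sum_k f k * (g k - h k) = \sum_k f k * g k - \sum_k f k * h k.
Proof. by rewrite -sumrB; apply: eq_bigr => k _; rewrite mulrBr. Qed.

Definition Rw u v : tensor := tad u [:: (1, v)] ++ tscale (-1) (dword u v).

Lemma lin_Rw F u v : lin F (Rw u v) =
  \sum_(k <- enum 'I_m) u 0 k * (F (k :: v) - F (v ++ [:: k])) - lin F (dword u v).
Proof. by rewrite /Rw lin_cat lin_scale lin_tad lin_one mulN1r. Qed.

Lemma in_ideal_Rw u v : in_ideal c (Rw u v).
Proof.
elim: v => [|a v IH].
  apply: in_ideal_zero => w; rewrite tcoef_lin lin_Rw /= lin_nil subr0.
  by rewrite big1 // => k _; rewrite subrr mulr0.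
apply: (in_ideal_teq (t2 := tsum [seq tscale (u 0 k) (tgen c [::] k a v) | k <- enum 'I_m]
   ++ tcons a (Rw u v))).
  apply: teq_lin => F.
  have Hs : lin F (tsum [seq tscale (u 0 k) (tgen c [::] k a v) | k <- enum 'I_m]) =
     \sum_k u 0 k * (F (k :: a :: v) - F (a :: k :: v) - \sum_l c k a l * F (l :: v)).
    rewrite /tsum lin_flatten big_map sum_enumI; apply: eq_bigr => k _.
    by rewrite lin_scale lin_tgen sum_enumI.
  rewrite lin_Rw lin_cat Hs lin_tcons lin_Rw lin_dword_cons /= !sum_enumI.
  have -> : \sum_l beta u a l * F (l :: v) =
      \sum_k u 0 k * \sum_l c k a l * F (l :: v).
    rewrite /beta (eq_bigr (fun l => \sum_i u 0 i * c i a l * F (l :: v))); last first.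
      by move=> l _; rewrite lie_bvecr mulr_suml.
    rewrite exchange_big; apply: eq_bigr => k _; rewrite mulr_sumr.
    by apply: eq_bigr => l _; rewrite mulrA.
  rewrite !sum_mulB.
  ring.
apply: in_ideal_cat; last by apply: in_ideal_tcons.
apply: in_ideal_tsum => t /mapP [k _ ->].
by apply: in_ideal_scale; apply: in_ideal_tgen.
Qed.


Lemma tad_Dder u t : in_ideal c (tad u t ++ tscale (-1) (Dder u t)).
Proof.
apply: (in_ideal_teq (t2 := Lext (Rw u) t)).
  apply: teq_lin => F; rewrite lin_cat lin_scale lin_tad /Dder !lin_Lext.
  by rewrite (lin_ext _ (fun v => lin_Rw F u v)) linB mulN1r.
by apply: in_ideal_Lext => v; apply: in_ideal_Rw.
Qed.

Lemma Dder_ideal u t : in_ideal c (tad u t) -> in_ideal c (Dder u t).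
Proof.
move=> H.
apply: (in_ideal_teq (t2 := tad u t ++ tscale (-1) (tad u t ++ tscale (-1) (Dder u t)))).
  by apply: teq_lin => F; rewrite lin_cat lin_scale lin_cat lin_scale; ring.
apply: (in_ideal_cat H); apply: in_ideal_scale; exact: tad_Dder.
Qed.

Variable x0 : 'I_m.

Lemma lin_dword_closed F u v : lin F (dword u v) =
  \sum_(0 <= p < size v) \sum_(l <- enum 'I_m) beta u (nth x0 v p) l * F (set_nth x0 v p l).
Proof.
elim: v F => [|a v IH] F; first by rewrite /= lin_nil big_geq.
rewrite lin_dword_cons IH /= big_nat_recl //=.
Qed.

Lemma setnth_swap (v w : word) p : size v = size w -> (p < size v)%N ->
  (set_nth x0 v p (nth x0 w p) == w) = (v == set_nth x0 w p (nth x0 v p)).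
Proof.
move=> Hs Hp; apply/eqP/eqP => H.
  apply: (@eq_from_nth _ x0); first by rewrite size_set_nth Hs; apply/esym/maxn_idPr; rewrite -Hs.
  move=> i Hi; rewrite nth_set_nth /=; case: eqP => [->//|/eqP ne].
  by rewrite -H nth_set_nth /= (negbTE ne).
apply: (@eq_from_nth _ x0); first by rewrite size_set_nth Hs; apply/maxn_idPr; rewrite -Hs.
move=> i Hi; rewrite nth_set_nth /=; case: eqP => [->//|/eqP ne].
by rewrite H nth_set_nth /= (negbTE ne).
Qed.

Lemma Kcv u (v w0 : word) :
  \sum_(0 <= p < size v) \sum_(l <- enum 'I_m) beta u (nth x0 v p) l * (set_nth x0 v p l == w0)%:R =
  \sum_(0 <= p < size w0) \sum_(k <- enum 'I_m) beta u k (nth x0 w0 p) * (v == set_nth x0 w0 p k)%:R.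
Proof.
case: (eqVneq (size v) (size w0)) => Hs.
  rewrite -Hs; apply: eq_big_nat => p /andP[_ Hp].
  have L : \sum_(l <- enum 'I_m) beta u (nth x0 v p) l * (set_nth x0 v p l == w0)%:R =
      beta u (nth x0 v p) (nth x0 w0 p) * (set_nth x0 v p (nth x0 w0 p) == w0)%:R.
    rewrite sum_enumI (bigD1 (nth x0 w0 p)) //= big1 ?addr0 // => l ne.
    case: eqP => [H|]; last by rewrite mulr0.
    by move: ne; rewrite -H nth_set_nth /= eqxx eqxx.
  have R : \sum_(k <- enum 'I_m) beta u k (nth x0 w0 p) * (v == set_nth x0 w0 p k)%:R =
      beta u (nth x0 v p) (nth x0 w0 p) * (v == set_nth x0 w0 p (nth x0 v p))%:R.
    rewrite sum_enumI (bigD1 (nth x0 v p)) //= big1 ?addr0 // => k ne.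
    case: eqP => [H|]; last by rewrite mulr0.
    by move: ne; rewrite H nth_set_nth /= eqxx eqxx.
  by rewrite L R (setnth_swap Hs Hp).
rewrite big_nat_cond big1; last first.
  move=> p /andP[/andP[_ Hp] _]; rewrite big1 // => l _.
  case: eqP => [H|]; last by rewrite mulr0.
  by move: Hs; rewrite -H size_set_nth (maxn_idPr Hp) eqxx.
rewrite big_nat_cond big1 // => p /andP[/andP[_ Hp] _]; rewrite big1 // => k _.
case: eqP => [H|]; last by rewrite mulr0.
by move: Hs; rewrite H size_set_nth (maxn_idPr Hp) eqxx.
Qed.

Lemma tcoef_Dder u t w0 : tcoef (Dder u t) w0 =
  \sum_(0 <= p < size w0) \sum_(k <- enum 'I_m)
     beta u k (nth x0 w0 p) * tcoef t (set_nth x0 w0 p k).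
Proof.
rewrite tcoef_lin /Dder lin_Lext (lin_ext _ (fun v => lin_dword_closed _ u v)).
rewrite (lin_ext _ (fun v => Kcv u v w0)) lin_sum; apply: eq_bigr => p _.
rewrite lin_sum; apply: eq_bigr => k _; rewrite linZ tcoef_lin //.
Qed.

Lemma Dder_sym u t : symmetric_tensor t -> symmetric_tensor (Dder u t).
Proof.
move=> Ht w w' Hp.
have /(perm_iotaP x0) [Is HIs Ew] := Hp.
rewrite !tcoef_Dder.
set n := size w'.
have sIs : size Is = n by rewrite (perm_size HIs) size_iota.
have uIs : uniq Is by rewrite (perm_uniq HIs) iota_uniq.
have Isn q : q \in Is -> (q < n)%N by rewrite (perm_mem HIs) mem_iota.
rewrite Ew size_map sIs.
set H0 := fun q => \sum_(k <- enum 'I_m) beta u k (nth x0 w' q) * tcoef t (set_nth x0 w' q k).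
transitivity (\sum_(0 <= p < n) H0 (nth 0 Is p)).
  apply: eq_big_nat => p /andP[_ Hpn]; rewrite /H0; apply: eq_bigr => k _.
  have Hpn' : (p < size Is)%N by rewrite sIs.
  have Hq : (nth 0 Is p < n)%N by apply: Isn; rewrite mem_nth.
  rewrite (nth_map 0) //; congr (_ * _); apply: Ht.
  have -> : set_nth x0 [seq nth x0 w' i | i <- Is] p k =
      map (nth x0 (set_nth x0 w' (nth 0 Is p) k)) Is.
    apply: (@eq_from_nth _ x0).
      by rewrite size_set_nth !size_map; apply/maxn_idPr.
    move=> i; rewrite size_set_nth size_map (maxn_idPr Hpn') => Hi.
    rewrite nth_set_nth /= !(nth_map 0) // nth_set_nth /= nth_uniq //.
  apply/(perm_iotaP x0); exists Is => //.
  by rewrite size_set_nth (maxn_idPr Hq).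
rewrite -(big_map (nth 0 Is) xpredT H0).
have -> : [seq nth 0 Is p | p <- index_iota 0 n] = Is.
  by rewrite /index_iota subn0 -sIs; exact: mkseq_nth.
by rewrite /index_iota subn0; apply: perm_big.
Qed.

End Der.

Section PBW.
Variable m : nat.
Variable c : 'I_m -> 'I_m -> 'I_m -> CC.
Hypothesis Hlie : is_lie_algebra c.
Variable x0 : 'I_m.
Variable dual : 'I_m -> 'rV[CC]_m.
Hypothesis Hdual : forall i j : 'I_m, killing c (bvec i) (dual j) = (i == j)%:R.
Local Notation word := (word m).
Local Notation tensor := (tensor m).

Definition Ablk (a : 'I_m) : 'M[CC]_(m + 1) := block_mx (adm c (bvec a)) 0 0 0.
Definition Vblk (j : 'I_m) : 'M[CC]_(m + 1) :=
  block_mx (adm c (dual j)) 0 0 (- \tr (adm c (dual j)))%:M.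
Definition hfun (j : 'I_m) (M : 'M[CC]_(m + 1)) : CC := \tr (Vblk j *m M).

Lemma hfun1 j : hfun j 1%:M = 0.
Proof. by rewrite /hfun mulmx1 /Vblk mxtrace_block mxtrace_scalar subrr. Qed.

Lemma hfunA j a : hfun j (Ablk a) = (a == j)%:R.
Proof.
rewrite /hfun /Vblk /Ablk mulmx_block mxtrace_block !mulmx0 ?mul0mx !addr0 mxtrace0 addr0.
by rewrite -/(killing c (dual j) (bvec a)) killingC Hdual.
Qed.

Lemma hfunD j M N : hfun j (M + N) = hfun j M + hfun j N.
Proof. by rewrite /hfun mulmxDr mxtraceD. Qed.
Lemma hfunZ j r M : hfun j (r *: M) = r * hfun j M.
Proof. by rewrite /hfun -scalemxAr mxtraceZ. Qed.

Definition Eblk (M : 'M[CC]_m) : 'M[CC]_(m + 1) := block_mx M 0 0 0.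
Lemma EblkD M N : Eblk (M + N) = Eblk M + Eblk N.
Proof. by rewrite /Eblk add_block_mx !addr0. Qed.
Lemma Eblk0 : Eblk 0 = 0.
Proof. by rewrite /Eblk block_mx0. Qed.
Lemma EblkZ r M : Eblk (r *: M) = r *: Eblk M.
Proof. by rewrite /Eblk scale_block_mx !scaler0. Qed.

Lemma Ablk_rep i j :
  Ablk j *m Ablk i - Ablk i *m Ablk j = \sum_(k <- enum 'I_m) c i j k *: Ablk k.
Proof.
have AA : forall a b, Ablk a *m Ablk b = Eblk (adm c (bvec a) *m adm c (bvec b)).
  by move=> a b; rewrite /Ablk mulmx_block !mulmx0 ?mul0mx !addr0.
rewrite !AA.
have -> : forall M N, Eblk M - Eblk N = Eblk (M - N).
  by move=> M N; rewrite EblkD -[- N]scaleN1r EblkZ scaleN1r.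
transitivity (Eblk (\sum_(k <- enum 'I_m) c i j k *: adm c (bvec k))); last first.
  by rewrite (big_morph Eblk EblkD Eblk0); apply: eq_bigr => k _; rewrite EblkZ.
congr Eblk; rewrite -(adm_lie Hlie) {1}(vec_expand (lie c _ _)) adm_sumv sum_enumI.
by apply: eq_bigr => k _; rewrite admZ lie_bvec.
Qed.


Section Slots.
Variable d : nat.
Variable th : 'I_d -> 'I_m.
Local Notation state := ('I_d -> 'M[CC]_(m + 1)).

Definition upd (st : state) (s : 'I_d) (M : 'M[CC]_(m + 1)) : state :=
  fun t => if t == s then M else st t.

Fixpoint G (v : word) (st : state) : CC :=
  match v with
  | [::] => \prod_t hfun (th t) (st t)
  | a :: v' => \sum_s G v' (upd st s (Ablk a *m st s))
  end.

Lemma G_ext v st st' : st =1 st' -> G v st = G v st'.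
Proof.
elim: v st st' => [|a v IH] st st' E /=.
  by apply: eq_bigr => t _; rewrite E.
apply: eq_bigr => s _; apply: IH => t; rewrite /upd E; case: eqP => //; rewrite E.
Qed.

Lemma G_lin v st s r M N :
  G v (upd st s (r *: M + N)) = r * G v (upd st s M) + G v (upd st s N).
Proof.
elim: v st s M N => [|a v IH] st s M N /=.
  rewrite (bigD1 s) //= [X in _ = r * X + _](bigD1 s) //= [X in _ = _ + X](bigD1 s) //=.
  rewrite /upd !eqxx hfunD hfunZ.
  set P := \prod_(i < d | i != s) _.
  have -> : \prod_(i < d | i != s) hfun (th i) (if i == s then M else st i) = P.
    by apply: eq_bigr => i /negbTE ->.
  have -> : \prod_(i < d | i != s) hfun (th i) (if i == s then N else st i) = P.
    by apply: eq_bigr => i /negbTE ->.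
  by rewrite /P (eq_bigr (fun i => hfun (th i) (st i))) => [|i /negbTE ->]; ring.
rewrite mulr_sumr -big_split; apply: eq_bigr => q _ /=.
case: (eqVneq q s) => [->|qs].
  rewrite (G_ext _ (st' := upd st s (r *: (Ablk a *m M) + Ablk a *m N))); last first.
    by move=> t; rewrite /upd; case: eqP => //; rewrite eqxx mulmxDr scalemxAr.
  by rewrite IH; congr (_ * _ + _); apply: G_ext => t; rewrite /upd eqxx; case: (t == s).
rewrite (G_ext _ (st' := upd (upd st q (Ablk a *m st q)) s (r *: M + N))); last first.
  by move=> t; rewrite /upd; case: (eqVneq t q) => [->|tq]; rewrite ?(negbTE qs) //.
rewrite IH; congr (_ * _ + _); apply: G_ext => t; rewrite /upd;
  by case: (eqVneq t q) => [->|tq]; rewrite ?(negbTE qs) ?eqxx.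
Qed.

Lemma G_zero v st s : G v (upd st s 0) = 0.
Proof.
have H := G_lin v st s 1 0 0; rewrite scale1r addr0 mul1r in H.
by apply: (addrI (G v (upd st s 0))); rewrite addr0 -H.
Qed.

Lemma G_sum v st s (I : Type) (r : seq I) (f : I -> CC) (M : I -> 'M[CC]_(m + 1)) :
  G v (upd st s (\sum_(k <- r) f k *: M k)) = \sum_(k <- r) f k * G v (upd st s (M k)).
Proof.
elim: r => [|k r IH]; first by rewrite !big_nil G_zero.
by rewrite !big_cons G_lin IH.
Qed.


Lemma G_base i j b st :
  G (i :: j :: b) st - G (j :: i :: b) st
  - \sum_(k <- enum 'I_m) c i j k * G (k :: b) st = 0.
Proof.
set W := fun s t => upd (upd st s (Ablk i *m st s)) t (Ablk j *m st t).
have E1 : G (i :: j :: b) st = \sum_s G b (upd st s (Ablk j *m Ablk i *m st s))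
    + \sum_s \sum_(t | t != s) G b (W s t).
  rewrite /= -big_split; apply: eq_bigr => s _; rewrite (bigD1 s) //=; congr (_ + _).
    by apply: G_ext => t; rewrite /upd eqxx; case: (t == s); rewrite ?mulmxA.
  by apply: eq_bigr => t ts; apply: G_ext => q; rewrite /W /upd (negbTE ts).
have E2 : G (j :: i :: b) st = \sum_s G b (upd st s (Ablk i *m Ablk j *m st s))
    + \sum_s \sum_(t | t != s) G b (W t s).
  rewrite /= -big_split; apply: eq_bigr => s _; rewrite (bigD1 s) //=; congr (_ + _).
    by apply: G_ext => t; rewrite /upd eqxx; case: (t == s); rewrite ?mulmxA.
  apply: eq_bigr => t ts; apply: G_ext => q; rewrite /W /upd (negbTE ts).
  by case: (eqVneq q t) => [->|qt]; rewrite ?eqxx ?(negbTE ts).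
have E3 : \sum_s \sum_(t | t != s) G b (W t s) = \sum_s \sum_(t | t != s) G b (W s t).
  rewrite (exchange_big_dep xpredT) //=; apply: eq_bigr => s _.
  by apply: eq_bigl => t; rewrite eq_sym.
have E4 : \sum_s G b (upd st s (Ablk j *m Ablk i *m st s))
    - \sum_s G b (upd st s (Ablk i *m Ablk j *m st s))
    = \sum_(k <- enum 'I_m) c i j k * G (k :: b) st.
  rewrite -sumrB.
  transitivity (\sum_s \sum_(k <- enum 'I_m) c i j k * G b (upd st s (Ablk k *m st s))).
    apply: eq_bigr => s _.
    have -> : Ablk j *m Ablk i *m st s = 1 *: (Ablk i *m Ablk j *m st s)
        + \sum_(k <- enum 'I_m) c i j k *: (Ablk k *m st s).
      rewrite scale1r; have := Ablk_rep i j; move/eqP; rewrite subr_eq => /eqP ->.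
      rewrite mulmxDl addrC; congr (_ + _); rewrite mulmx_suml.
      by apply: eq_bigr => k _; rewrite scalemxAl.
    by rewrite G_lin G_sum mul1r addrC addKr.
  rewrite exchange_big /=; apply: eq_bigr => k _; by rewrite mulr_sumr.
rewrite E1 E2 E3 -E4; ring.
Qed.

Lemma G_gen pre i j b st :
  G (pre ++ i :: j :: b) st - G (pre ++ j :: i :: b) st
  - \sum_(k <- enum 'I_m) c i j k * G (pre ++ k :: b) st = 0.
Proof.
elim: pre st => [|x pre IH] st; first exact: G_base.
rewrite /= -!sumrB.
under eq_bigr do rewrite mulr_sumr.
rewrite exchange_big -sumrB big1 // => s _; rewrite -(IH (upd st s (Ablk x *m st s))).
Qed.


Fixpoint allw (n : nat) : seq (seq 'I_d) :=
  if n is n'.+1 then [seq s :: al | s <- enum 'I_d, al <- allw n'] else [:: [::]].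

Fixpoint Pm (t : 'I_d) (v : word) (al : seq 'I_d) : 'M[CC]_(m + 1) :=
  match v, al with
  | a :: v', s :: al' => Pm t v' al' *m (if s == t then Ablk a else 1%:M)
  | _, _ => 1%:M
  end.

Lemma Gexp v st : G v st =
  \sum_(al <- allw (size v)) \prod_t hfun (th t) (Pm t v al *m st t).
Proof.
elim: v st => [|a v IH] st.
  by rewrite /= big_seq1; apply: eq_bigr => t _; rewrite mul1mx.
rewrite /= big_allpairs_dep big_enum /=; apply: eq_bigr => s _; rewrite IH.
apply: eq_bigr => al _; apply: eq_bigr => t _; rewrite /upd -mulmxA.
by case: (eqVneq t s) => [->|ts]; rewrite ?eqxx ?mul1mx // eq_sym (negbTE ts) mul1mx.
Qed.

Lemma mem_allw al n : al \in allw n -> size al = n.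
Proof.
elim: n al => [|n IH] al /=; first by rewrite inE => /eqP ->.
by case/allpairsP => [[s al'] [_ /IH /= <- ->]].
Qed.

Lemma allw_mem al : al \in allw (size al).
Proof.
elim: al => [|s al IH] /=; first by rewrite inE.
by apply: (allpairs_f (fun s al => s :: al)); rewrite ?mem_enum.
Qed.

Lemma Pm_notin t v al : t \notin al -> Pm t v al = 1%:M.
Proof.
elim: al v => [|s al IH] [|a v] //=; rewrite inE negb_or => /andP[ts tn].
by rewrite IH // eq_sym (negbTE ts) mulmx1.
Qed.

Lemma Pm_uniq t v al : uniq al -> t \in al -> size al = size v ->
  Pm t v al = Ablk (nth x0 v (index t al)).
Proof.
elim: al v => [|s al IH] [|a v] //= /andP[sn u]; rewrite inE => tin [sz].
case: (eqVneq s t) => [st|ts].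
  by rewrite -st Pm_notin // mul1mx.
rewrite mulmx1 IH //; by move: tin; rewrite eq_sym (negbTE ts).
Qed.

Lemma cover (al : seq 'I_d) : (forall t, t \in al) -> (size al <= d)%N -> uniq al /\ size al = d.
Proof.
move=> all sz.
have c1 : #|al| = #|'I_d| by apply: eq_card => t; rewrite all.
rewrite card_ord in c1.
have c2 := card_size al.
have e : size al = d by apply/eqP; rewrite eqn_leq sz; move: c2; rewrite c1 => ->.
by split => //; apply/card_uniqP; rewrite e.
Qed.

Lemma cover2 (al : seq 'I_d) : uniq al -> size al = d -> forall t, t \in al.
Proof.
move=> u sz t; apply/negPn/negP => tn.
have : (#|al| <= #|predC1 t|)%N.
  by apply: subset_leq_card; apply/subsetP => q qa; rewrite !inE; apply/eqP => qt; move: tn; rewrite -qt qa.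
rewrite (card_uniqP u) sz cardC1 card_ord => H.
have := ltn_ord t; lia.
Qed.


Lemma G1_eq (v : word) : size v = d -> G v (fun _ => 1%:M) =
  \sum_(al <- allw d) (if uniq al then \prod_t (nth x0 v (index t al) == th t)%:R else 0).
Proof.
move=> sv; rewrite Gexp sv; apply: eq_big_seq => al Hal.
have sal := mem_allw Hal.
case: (pickP (fun t => t \notin al)) => [t tn | allin].
  have -> : uniq al = false.
    by apply/negP => u; move: tn; rewrite (cover2 u sal t).
  by rewrite (bigD1 t) //= mulmx1 Pm_notin // hfun1 mul0r.
have all' : forall t, t \in al by move=> t; move: (allin t) => /= /negbFE.
have [u _] := cover all' (eq_leq sal).
rewrite u; apply: eq_bigr => t _; rewrite mulmx1 Pm_uniq //; last by rewrite sal sv.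
by rewrite hfunA.
Qed.

Lemma G1_small (v : word) : (size v < d)%N -> G v (fun _ => 1%:M) = 0.
Proof.
move=> sv; rewrite Gexp big1_seq // => al /andP[_ Hal].
have sal := mem_allw Hal.
case: (pickP (fun t => t \notin al)) => [t tn | allin].
  by rewrite (bigD1 t) //= mulmx1 Pm_notin // hfun1 mul0r.
have all' : forall t, t \in al by move=> t; move: (allin t) => /= /negbFE.
have sl : (size al <= d)%N by rewrite sal ltnW.
have [_ e] := cover all' sl.
by move: sv; rewrite -sal e ltnn.
Qed.

Lemma prod_ind (P : pred 'I_d) : \prod_t ((P t)%:R : CC) = ([forall t, P t])%:R.
Proof.
case: (boolP [forall t, P t]) => [/forallP H|/forallPn [t Ht]].
  by rewrite big1 // => t _; rewrite H.
by rewrite (bigD1 t) //= (negbTE Ht) mul0r.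
Qed.

Lemma ind_perm (al : seq 'I_d) (v : word) : uniq al -> size al = d ->
  (if size v == d then \prod_t ((nth x0 v (index t al) == th t)%:R : CC) else 0)
  = (v == map th al)%:R.
Proof.
move=> u sal; have cov := cover2 u sal.
case: eqP => sv; last first.
  by case: eqP => // E; move: sv; rewrite E size_map sal.
rewrite prod_ind.
suff -> : [forall t, nth x0 v (index t al) == th t] = (v == map th al) by [].
apply/idP/idP => [/forallP H|/eqP ->].
  apply/eqP; apply: (@eq_from_nth _ x0); first by rewrite size_map sal.
  move=> i Hi; have Hid : (i < d)%N by rewrite -sv.
  rewrite (nth_map (Ordinal Hid)) ?sal //.
  by have := H (nth (Ordinal Hid) al i); rewrite (index_uniq (Ordinal Hid)) ?sal // => /eqP.
apply/forallP => t; rewrite (nth_map t) ?index_mem ?cov // nth_index ?cov //.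
Qed.

Lemma count_if (T : Type) (s : seq T) (p : pred T) (X : CC) :
  \sum_(a <- s) (if p a then X else 0) = (count p s)%:R * X.
Proof.
elim: s => [|a s IH]; first by rewrite big_nil mul0r.
by rewrite big_cons IH /= natrD mulrDl; case: (p a); rewrite ?mul1r ?mul0r ?add0r.
Qed.

Lemma extract (y : tensor) (w0 : word) : size w0 = d ->
  (forall t : 'I_d, th t = nth x0 w0 t) -> symmetric_tensor y ->
  (forall w, (d < size w)%N -> tcoef y w = 0) ->
  lin (fun v => G v (fun _ => 1%:M)) y = (count uniq (allw d))%:R * tcoef y w0.
Proof.
move=> sw0 Hth Hsym Hlong.
set F' := fun v : word => \sum_(al <- allw d) (if uniq al then (v == map th al)%:R else 0 : CC).
rewrite (@lin_eq_tcoef m _ F' y).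
  rewrite /F' lin_sum -count_if; apply: eq_big_seq => al Hal.
  case: ifP => u; last by rewrite lin0F.
  rewrite -tcoef_lin; apply: Hsym.
  have -> : w0 = map th (enum 'I_d).
    apply: (@eq_from_nth _ x0); first by rewrite size_map size_enum_ord.
    move=> i Hi; have Hid : (i < d)%N by rewrite -sw0.
    by rewrite (nth_map (Ordinal Hid)) ?size_enum_ord // Hth nth_enum_ord.
  apply: perm_map; apply: uniq_perm => //; first exact: enum_uniq.
  by move=> t; rewrite mem_enum (cover2 u (mem_allw Hal)).
move=> w; case: (ltngtP (size w) d) => H.
- rewrite G1_small // /F' big1_seq ?mulr0 // => al /andP[_ Hal].
  case: ifP => // u; case: eqP => // E; move: H; rewrite E size_map (mem_allw Hal) ltnn.
  by [].
- by rewrite Hlong // !mul0r.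
- rewrite G1_eq //; congr (_ * _); apply: eq_big_seq => al Hal; case: ifP => u //.
  by rewrite -(ind_perm w u (mem_allw Hal)) H eqxx.
Qed.

End Slots.

Lemma pbw (y : tensor) : symmetric_tensor y -> in_ideal c y -> forall w, tcoef y w = 0.
Proof.
move=> Hsym Hid.
set D := (\max_(p <- y) size p.2).+1.
have big w : (D <= size w)%N -> tcoef y w = 0.
  move=> Hw; rewrite /tcoef big1_seq // => p /andP[/eqP E py].
  have := @leq_bigmax_seq _ y xpredT (fun p : CC * word => size p.2) p py isT.
  rewrite E -/D => H2; move: Hw; rewrite /D => Hw; have := leq_ltn_trans H2 Hw; by rewrite ltnn.
suff H : forall n w, (D <= size w + n)%N -> tcoef y w = 0.
  by move=> w; apply: (H D); rewrite leq_addl.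
elim=> [|n IH] w Hw; first by apply: big; rewrite addn0 in Hw.
case: (leqP D (size w + n)) => H1; first exact: IH.
have Hlong : forall w', (size w < size w')%N -> tcoef y w' = 0.
  by move=> w' Hw'; apply: IH; lia.
have E := @extract (size w) (fun t => nth x0 w t) y w (erefl _) (fun t => erefl _) Hsym Hlong.
have Z : lin (fun v => G (fun t : 'I_(size w) => nth x0 w t) v (fun _ => 1%:M)) y = 0.
  by apply: ideal_lin Hid => pre i j b; rewrite lin_tgen; apply: G_gen.
rewrite Z in E.
have cp : (0 < count uniq (allw (size w) (size w)))%N.
  rewrite -has_count; apply/hasP; exists (enum 'I_(size w)); last exact: enum_uniq.
  by have := allw_mem (enum 'I_(size w)); rewrite size_enum_ord.
move/esym/eqP: E; rewrite mulf_eq0 pnatr_eq0 => /orP[|/eqP //].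
by move/eqP => E0; move: cp; rewrite E0.
Qed.
End PBW.

Section Final.
Variable m : nat.
Variable c : 'I_m -> 'I_m -> 'I_m -> CC.
Hypothesis Hlie : is_lie_algebra c.
Variable dual : 'I_m -> 'rV[CC]_m.
Hypothesis Hdual : forall i j : 'I_m, killing c (bvec i) (dual j) = (i == j)%:R.
Variable n : nat.
Variable pi : 'I_m -> 'M[CC]_n.
Hypothesis Hrep : is_rep c pi.

Lemma kill_dual y j : killing c y (dual j) = y 0 j.
Proof.
rewrite killing_suml (bigD1 j) //= Hdual eqxx mulr1 big1 ?addr0 // => i ij.
by rewrite Hdual (negbTE ij) mulr0.
Qed.

Lemma nondeg y : (forall k, killing c (bvec k) y = 0) -> y = 0.
Proof.
move=> H.
set K := \matrix_(k, l) killing c (bvec k) (bvec l).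
set Dm := \matrix_(j, l) dual j 0 l.
have KD : K *m Dm^T = 1%:M.
  apply/matrixP => i j; rewrite !mxE -Hdual [RHS]killing_sumr.
  by apply: eq_bigr => l _; rewrite !mxE mulrC.
have DK := mulmx1C KD.
have Ky : K *m y^T = 0.
  apply/matrixP => k q; rewrite !mxE; transitivity (killing c (bvec k) y); last exact: H.
  by rewrite killing_sumr; apply: eq_bigr => l _; rewrite !mxE (ord1 q) mulrC.
have : y^T = 0 by rewrite -[y^T]mul1mx -DK -mulmxA Ky mulmx0.
by move/(congr1 trmx); rewrite trmxK trmx0.
Qed.

Lemma lie_dual u j : lie c u (dual j) = - \sum_i (lie c u (bvec i)) 0 j *: dual i.
Proof.
apply/eqP; rewrite -subr_eq0 opprK; apply/eqP; apply: nondeg => k.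
rewrite killingDr killing_sumvr.
have := killing_inv Hlie u (bvec k) (dual j); rewrite kill_dual => H.
rewrite (bigD1 k) //= killingZr Hdual eqxx mulr1 big1 ?addr0.
  by rewrite addrC.
by move=> i ik; rewrite killingZr Hdual eq_sym (negbTE ik) mulr0.
Qed.

Lemma pivE (v : 'rV[CC]_m) a b : piv pi v a b = \sum_l v 0 l * pi l a b.
Proof. by rewrite /piv summxE; apply: eq_bigr => l _; rewrite mxE. Qed.

Lemma piv_lie_dual u i a b :
  piv pi (lie c u (dual i)) a b = - \sum_k (lie c u (bvec k)) 0 i * piv pi (dual k) a b.
Proof.
rewrite pivE lie_dual.
have Hr : forall l, (- \sum_k (lie c u (bvec k)) 0 i *: dual k) 0 l =
    - \sum_k (lie c u (bvec k)) 0 i * dual k 0 l.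
  by move=> l; rewrite mxE summxE; congr (- _); apply: eq_bigr => k _; rewrite mxE.
under eq_bigr do rewrite Hr mulNr mulr_suml.
rewrite sumrN exchange_big; congr (- _); apply: eq_bigr => k _; rewrite pivE mulr_sumr.
by apply: eq_bigr => l _; rewrite mulrA.
Qed.

Lemma rep_vec u v : piv pi u *m piv pi v - piv pi v *m piv pi u = piv pi (lie c u v).
Proof.
have E : forall x y, piv pi x *m piv pi y =
    \sum_i \sum_j (x 0 i * y 0 j) *: (pi i *m pi j).
  move=> x y; rewrite /piv mulmx_suml; apply: eq_bigr => i _.
  rewrite -scalemxAl mulmx_sumr scaler_sumr; apply: eq_bigr => j _.
  by rewrite -scalemxAr scalerA.
rewrite !E [X in _ - X]exchange_big -sumrB.
transitivity (\sum_i \sum_j (u 0 i * v 0 j) *: piv pi (lie c (bvec i) (bvec j))).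
  apply: eq_bigr => i _; rewrite -sumrB; apply: eq_bigr => j _.
  by rewrite -Hrep scalerBr mulrC.
have -> : piv pi (lie c u v) = \sum_i \sum_j \sum_k (u 0 i * v 0 j * c i j k) *: pi k.
  rewrite /piv; under eq_bigr do rewrite lieE scaler_suml.
  rewrite exchange_big; apply: eq_bigr => i _.
  under eq_bigr do rewrite scaler_suml.
  by rewrite exchange_big.
apply: eq_bigr => i _; apply: eq_bigr => j _; rewrite /piv scaler_sumr.
by apply: eq_bigr => k _; rewrite lie_bvec scalerA.
Qed.


Lemma main (x0 : 'I_m) (z : tensor m) :
  symmetric_tensor z -> central c z -> in_R c pi (Mz c pi dual z).
Proof.
move=> Hzsym Hzc u a b.
have Dz0 : forall w, tcoef (Dder c u z) w = 0.
  exact: (pbw Hlie x0 Hdual (Dder_sym c x0 u Hzsym) (Dder_ideal (Hzc u))).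
set M := Mz c pi dual z.
set X := tsum [seq tsub (tscale (piv pi u a d) (M d b)) (tscale (piv pi u d b) (M a d))
              | d <- enum 'I_n].
have -> : endten_act pi u M a b = X ++ tad u (M a b) by [].
apply: (in_ideal_teq (t2 := (X ++ Dder c u (M a b))
    ++ (tad u (M a b) ++ tscale (-1) (Dder c u (M a b))))).
  by apply: teq_lin => F; rewrite !lin_cat lin_scale; ring.
apply: in_ideal_cat; last exact: tad_Dder.
apply: in_ideal_zero => w; rewrite tcoef_lin.
move: (fun v : word m => (v == w)%:R : CC) => F.
set S := fun i => lin F (subst_op c (bvec i) z).
have Slin : forall x, lin F (subst_op c x z) = \sum_j x 0 j * S j.
  move=> x; rewrite subst_Lext lin_Lext (lin_ext _ (fun v => lin_sword_lin c F x v)) lin_sum.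
  by apply: eq_bigr => j _; rewrite linZ /S subst_Lext lin_Lext.
have LMg : forall G a' b', lin G (M a' b') =
    \sum_i piv pi (dual i) a' b' * lin G (subst_op c (bvec i) z).
  move=> G a' b'; rewrite /M /Mz /tsum lin_flatten big_map sum_enumI.
  by apply: eq_bigr => i _; rewrite lin_scale.
have LS : forall x, lin F (Dder c u (subst_op c x z)) = lin F (subst_op c (lie c u x) z).
  move=> x.
  have H1 : forall v, lin (fun w => lin F (dword c u w)) (sword c x v) =
      lin F (sword c (lie c u x) v) + lin F (Lext (sword c x) (dword c u v)).
    by move=> v; rewrite -(Lcomm Hlie) /Dder lin_Lext.
  rewrite subst_Lext /Dder !lin_Lext (lin_ext _ H1) linD.
  rewrite subst_Lext lin_Lext -[RHS]addr0; congr (_ + _).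
  rewrite (lin_ext _ (fun v => lin_Lext F (sword c x) (dword c u v))).
  by rewrite -(lin_Lext (fun w => lin F (sword c x w)) (dword c u) z) lin0.
have LD : lin F (Dder c u (M a b)) =
    \sum_i piv pi (dual i) a b * \sum_j (lie c u (bvec i)) 0 j * S j.
  rewrite /Dder lin_Lext LMg; apply: eq_bigr => i _.
  by rewrite -lin_Lext -/(Dder c u _) LS Slin.
have LX : lin F X = \sum_i piv pi (lie c u (dual i)) a b * S i.
  transitivity (\sum_i (\sum_d (piv pi u a d * piv pi (dual i) d b
                  - piv pi (dual i) a d * piv pi u d b)) * S i); last first.
    apply: eq_bigr => i _; rewrite -rep_vec !mxE -sumrB //.
  rewrite /X /tsum lin_flatten big_map sum_enumI.
  under eq_bigr do rewrite /tsub lin_cat !lin_scale !LMg.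
  under [RHS]eq_bigr do rewrite mulr_suml.
  rewrite [RHS]exchange_big; apply: eq_bigr => d _.
  rewrite mulN1r !mulr_sumr -sumrB; apply: eq_bigr => i _; rewrite /S; ring.
rewrite lin_cat LX LD.
have -> : \sum_i piv pi (dual i) a b * \sum_j (lie c u (bvec i)) 0 j * S j =
    \sum_j \sum_i (lie c u (bvec i)) 0 j * piv pi (dual i) a b * S j.
  under eq_bigr do rewrite mulr_sumr.
  rewrite exchange_big; apply: eq_bigr => j _; apply: eq_bigr => i _; ring.
rewrite -big_split big1 // => i _.
by rewrite piv_lie_dual mulNr mulr_suml; apply: addNr.
Qed.

End Final.

Unset Implicit Arguments.

Theorem proposition3p12
  (m : nat) (c : 'I_m -> 'I_m -> 'I_m -> CC)
  (Hsimple : simple_lie c)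
  (dual : 'I_m -> 'rV[CC]_m)
  (Hdual : forall i j : 'I_m, killing c (bvec i) (dual j) = (i == j)%:R)
  (n : nat) (pi : 'I_m -> 'M[CC]_n)
  (Hrep : is_rep c pi) (Hirr : irreducible_rep pi)
  (z : tensor m)
  (Hzsym : symmetric_tensor z) (Hzc : central c z) :
  in_R c pi (Mz c pi dual z).
Proof.
case: Hsimple => Hlie [[u [v nz]] _].
have [x0 _] : exists k : 'I_m, (lie c u v) 0 k != 0.
  apply/existsP; apply: contraR nz => /existsPn H.
  by apply/eqP/rowP => k; rewrite [RHS]mxE; apply/eqP; move: (H k); rewrite negbK.
exact: (main Hlie Hdual Hrep x0 Hzsym Hzc).
Qed.
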